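(* Let $H_0$ be an admissible Hamiltonian with vector field $f$, let $g=J\nabla K_0$ be associated to $f$ via $B$ (so $\nabla K_0=B\nabla H_0$), and let $\widetilde H_0(x,\varepsilon)=x^T\mathcal H\big(I-\varepsilon^2(J(x)\mathcal H)^2\big)^{-1}x$ and $\widetilde K_0(x,\varepsilon)=x^T\mathcal K\big(I-\varepsilon^2(J(x)\mathcal K)^2\big)^{-1}x$, where $\mathcal H=\nabla^2H_0$, $\mathcal K=\nabla^2K_0=B\mathcal H$. Then $$\nabla_x\widetilde K_0(x,\varepsilon)=B\,\nabla_x\widetilde H_0(x,\varepsilon),$$ and consequently $A\,\nabla_x^2\widetilde H_0(x,\varepsilon)=\nabla_x^2\widetilde H_0(x,\varepsilon)\,A^T$ and $A\,\nabla_x^2\widetilde K_0(x,\varepsilon)=\nabla_x^2\widetilde K_0(x,\varepsilon)\,A^T$ wherever defined.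
   Context: Fix an integer $n\ge 2$. Points of $\mathbb R^{2n}$ are $x=(x_1,\dots,x_{2n})^{T}$; write $u=(x_1,\dots,x_n)^T$. Let $X(u)$ be the $n\times n$ matrix with entries $X(u)_{ij}=x_{k}$ where $k\in\{1,\dots,n\}$, $k\equiv i+j-1 \pmod n$, and let $J(x)=\begin{pmatrix}0&X(u)\\-X(u)&0\end{pmatrix}$ (a skew-symmetric $2n\times 2n$ matrix depending linearly on $x$). Let $\mathcal P$ be the $n\times n$ cyclic shift matrix ($\mathcal P_{i,i+1}=1$ for $1\le i\le n-1$, $\mathcal P_{n,1}=1$, all other entries $0$) and $A=\begin{pmatrix}\mathcal P&0\\0&\mathcal P\end{pmatrix}$. An admissible Hamiltonian is a homogeneous quadratic form $H(x)=\tfrac12 x^T\mathcal H x$ with a constant symmetric matrix $\mathcal H=\nabla^2H$ satisfying $A\mathcal H=\mathcal H A^T$; its Hamiltonian vector field is $f(x)=J(x)\nabla H(x)$. Associated vector fields: let $B=\sum_{i=0}^{n-1}\alpha_iA^i$ with $\alpha_i\in\mathbb C$ and $B^2=I$. If $H$ is an admissible Hamiltonian with vector field $f$, put $K(x)=\tfrac12 x^T B\mathcal H x$ (so $\nabla K=B\nabla H$) and $g(x)=J(x)\nabla K(x)=B^Tf(x)$; $g$ is said to be associated to $f$ via $B$. (When $B$ is complex, everything is considered over $\mathbb C^{2n}$.) The functions $\widetilde H_0,\widetilde K_0$ in the claim coincide with the conserved quantities $(2\varepsilon)^{-1}x^TJ(\frac{x+\tilde x}{2})^{-1}\tilde x$,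 $\tilde x=\Phi_f(x,\varepsilon)$ (resp. with $g$) of the Kahan maps $\Phi_f(x,\varepsilon)=(I-\varepsilon f'(x))^{-1}x$, $\Phi_g$. *)

(* Defs.v *)
(* Scalars: an arbitrary numFieldType R (covers real-like and
   complex-like fields, e.g. algC); differentiability is the usual epsilon-delta
   (Frechet) notion w.r.t. the norm `|.| of R. *)
From HB Require Import structures.
From mathcomp Require Import all_boot all_order all_algebra.
Set Implicit Arguments. Unset Strict Implicit. Unset Printing Implicit Defensive.
Import Order.TTheory GRing.Theory Num.Theory.
Local Open Scope ring_scope.

Section Defs.
Variable R : numFieldType.
Variable n : nat.

(* X(u)_{ij} = x_k, k = i+j-1 mod n (1-indexed)  <=>  0-indexed k = (i+j) mod n *)
Definition ord_addmod (i j : 'I_n) : 'I_n :=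
  Ordinal (ltn_pmod (i + j) (leq_ltn_trans (leq0n i) (ltn_ord i))).

Definition Xmat (x : 'cV[R]_(n + n)) : 'M[R]_n :=
  \matrix_(i < n, j < n) x (lshift n (ord_addmod i j)) 0.

Definition Jmat (x : 'cV[R]_(n + n)) : 'M[R]_(n + n) :=
  block_mx 0 (Xmat x) (- Xmat x) 0.

Definition Pshift : 'M[R]_n :=
  \matrix_(i < n, j < n) (((j : nat) == (i.+1 %% n)%N)%:R : R).

Definition Amat : 'M[R]_(n + n) := block_mx Pshift 0 0 Pshift.

Definition vnorm (m : nat) (h : 'cV[R]_m) : R := \sum_i `|h i 0|.

Definition is_gradient (F : 'cV[R]_(n + n) -> R) (x g : 'cV[R]_(n + n)) : Prop :=
  forall e : R, 0 < e -> exists2 d : R, 0 < d &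
    forall h : 'cV[R]_(n + n), vnorm h < d ->
      `|F (x + h) - F x - (g^T *m h) 0 0| <= e * vnorm h.

Definition is_hessian (F : 'cV[R]_(n + n) -> R) (x : 'cV[R]_(n + n))
    (M : 'M[R]_(n + n)) : Prop :=
  exists2 d : R, 0 < d & exists G : 'cV[R]_(n + n) -> 'cV[R]_(n + n),
    (forall y, vnorm (y - x) < d -> is_gradient F y (G y)) /\
    (forall e : R, 0 < e -> exists2 d' : R, 0 < d' &
      forall h : 'cV[R]_(n + n), vnorm h < d' ->
        vnorm (G (x + h) - G x - M *m h) <= e * vnorm h).

Definition Dmat (S : 'M[R]_(n + n)) (x : 'cV[R]_(n + n)) (eps : R) :
  'M[R]_(n + n) := 1%:M - eps ^+ 2 *: ((Jmat x *m S) *m (Jmat x *m S)).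

Definition tildeF (S : 'M[R]_(n + n)) (eps : R) (x : 'cV[R]_(n + n)) : R :=
  (x^T *m S *m invmx (Dmat S x eps) *m x) 0 0.

End Defs.

(* Main.v *)
Require Import Defs.
From HB Require Import structures.
From mathcomp Require Import all_boot all_order all_algebra.
From mathcomp Require Import mpoly.
From mathcomp Require Import ring.
Set Implicit Arguments. Unset Strict Implicit. Unset Printing Implicit Defensive.
Import Order.TTheory GRing.Theory Num.Theory.
Local Open Scope ring_scope.

Section Near.
Variable R : numFieldType.

Lemma two_pos (d1 d2 : R) : 0 < d1 -> 0 < d2 ->
  exists2 d : R, 0 < d & d <= d1 /\ d <= d2.
Proof.
move=> h1 h2; exists (d1 * d2 / (d1 + d2)).
  by rewrite divr_gt0 ?mulr_gt0 ?addr_gt0.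
have h12 : 0 < d1 + d2 by rewrite addr_gt0.
split; rewrite ler_pdivrMr //.
  by rewrite mulrDr lerDr mulr_ge0 // ltW.
by rewrite mulrDr mulrC lerDl mulr_ge0 // ltW.
Qed.

Lemma eqle (x y : R) : x = y -> x <= y. Proof. by move->. Qed.

Variable m : nat.
Implicit Types h k : 'cV[R]_m.

Definition near0 (P : 'cV[R]_m -> Prop) :=
  exists2 d : R, 0 < d & forall h, vnorm h < d -> P h.

Lemma near0_and P Q : near0 P -> near0 Q -> near0 (fun h => P h /\ Q h).
Proof.
move=> [d1 d1p H1] [d2 d2p H2]; have [d dp [l1 l2]] := two_pos d1p d2p.
exists d => // h hd; split; [apply: H1 | apply: H2]; exact: lt_le_trans hd _.
Qed.

Lemma near0_imp (P Q : 'cV[R]_m -> Prop) :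
  (forall h, P h -> Q h) -> near0 P -> near0 Q.
Proof. by move=> PQ [d dp H]; exists d => // h /H /PQ. Qed.

Lemma vnorm_ge0 h : 0 <= vnorm h.
Proof. by rewrite /vnorm sumr_ge0. Qed.

Lemma vnorm_coord h i : `|h i 0| <= vnorm h.
Proof.
rewrite /vnorm (bigD1 i) //= lerDl sumr_ge0 //.
Qed.

Lemma vnormD h k : vnorm (h + k) <= vnorm h + vnorm k.
Proof.
rewrite /vnorm -big_split /=; apply: ler_sum => i _; rewrite mxE; exact: ler_normD.
Qed.

Lemma vnormN h : vnorm (- h) = vnorm h.
Proof. by rewrite /vnorm; apply: eq_bigr => i _; rewrite mxE normrN. Qed.

Lemma vnormZ c h : vnorm (c *: h) = `|c| * vnorm h.
Proof. by rewrite /vnorm mulr_sumr; apply: eq_bigr => i _; rewrite mxE normrM. Qed.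

Lemma vnorm0 : vnorm (0 : 'cV[R]_m) = 0.
Proof. by rewrite /vnorm big1 // => i _; rewrite mxE normr0. Qed.

Lemma vnorm_delta (k : 'I_m) : vnorm (delta_mx k 0 : 'cV[R]_m) = 1.
Proof.
rewrite /vnorm (bigD1 k) //= big1 ?addr0 => [|i ik]; rewrite mxE.
  by rewrite !eqxx normr1.
by rewrite (negbTE ik) normr0.
Qed.

Lemma vnorm_eq0 h : vnorm h = 0 -> h = 0.
Proof.
move=> h0; apply/matrixP => i j; rewrite (ord1 j) mxE; apply/eqP.
rewrite -normr_eq0 eq_le normr_ge0 andbT -h0; exact: vnorm_coord.
Qed.

Definition dot (g h : 'cV[R]_m) : R := (g^T *m h) 0 0.

Lemma dotE g h : dot g h = \sum_i g i 0 * h i 0.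
Proof. by rewrite /dot mxE; apply: eq_bigr => i _; rewrite mxE. Qed.

Lemma dotDr g h k : dot g (h + k) = dot g h + dot g k.
Proof. by rewrite !dotE -big_split; apply: eq_bigr => i _; rewrite mxE mulrDr. Qed.
Lemma dotDl g h k : dot (g + h) k = dot g k + dot h k.
Proof. by rewrite !dotE -big_split; apply: eq_bigr => i _; rewrite mxE mulrDl. Qed.
Lemma dotZl c g h : dot (c *: g) h = c * dot g h.
Proof. by rewrite !dotE mulr_sumr; apply: eq_bigr => i _; rewrite mxE mulrA. Qed.
Lemma dotNl g h : dot (- g) h = - dot g h.
Proof. by rewrite -scaleN1r dotZl mulN1r. Qed.
Lemma dot0l h : dot 0 h = 0.
Proof. by rewrite dotE big1 // => i _; rewrite mxE mul0r. Qed.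
Lemma dot_suml (I : Type) (r : seq I) (F : I -> 'cV[R]_m) h :
  dot (\sum_(i <- r) F i) h = \sum_(i <- r) dot (F i) h.
Proof.
elim: r => [|a r IH]; first by rewrite !big_nil dot0l.
by rewrite !big_cons dotDl IH.
Qed.

Lemma dot_bound g h : `|dot g h| <= vnorm g * vnorm h.
Proof.
rewrite dotE /vnorm mulr_suml; apply: le_trans (ler_norm_sum _ _ _) _.
apply: ler_sum => i _; rewrite normrM ler_wpM2l //; exact: vnorm_coord.
Qed.

Definition lo (r : 'cV[R]_m -> R) :=
  forall e : R, 0 < e -> near0 (fun h => `|r h| <= e * vnorm h).
Definition van (r : 'cV[R]_m -> R) :=
  forall e : R, 0 < e -> near0 (fun h => `|r h| <= e).
Definition bnd (r : 'cV[R]_m -> R) :=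
  exists2 c : R, 0 <= c & near0 (fun h => `|r h| <= c).

Lemma lo_ext r r' : near0 (fun h => r h = r' h) -> lo r -> lo r'.
Proof.
move=> E L e ep; apply: near0_imp (near0_and E (L e ep)) => h [-> //].
Qed.

Lemma lo_add r s : lo r -> lo s -> lo (fun h => r h + s h).
Proof.
move=> Lr Ls e ep; have e2 : 0 < e / 2 by rewrite divr_gt0.
apply: near0_imp (near0_and (Lr _ e2) (Ls _ e2)) => h [H1 H2].
apply: le_trans (ler_normD _ _) _.
by rewrite [e]splitr mulrDl lerD.
Qed.

Lemma lo_scale c r : lo r -> lo (fun h => c * r h).
Proof.
move=> L e ep; have cp : 0 < `|c| + 1 by rewrite ltr_wpDl.
have e2 : 0 < e / (`|c| + 1) by rewrite divr_gt0.
apply: near0_imp (L _ e2) => h H; rewrite normrM.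
apply: le_trans (_ : (`|c| + 1) * (e / (`|c| + 1) * vnorm h) <= _).
  apply: ler_pM => //; first by rewrite lerDl.
rewrite mulrA mulrCA divff ?mulr1 //; exact: lt0r_neq0.
Qed.

Lemma lo_sub r s : lo r -> lo s -> lo (fun h => r h - s h).
Proof.
move=> Lr Ls; apply: lo_add => //; apply: lo_ext (lo_scale (-1) Ls).
by exists 1 => // h _; rewrite mulN1r.
Qed.

Lemma lo_mulbnd r s : lo r -> bnd s -> lo (fun h => r h * s h).
Proof.
move=> L [c c0 B] e ep.
have cp : 0 < c + 1 by rewrite ltr_wpDl.
have e2 : 0 < e / (c + 1) by rewrite divr_gt0.
apply: near0_imp (near0_and (L _ e2) B) => h [H1 H2]; rewrite normrM.
apply: (@le_trans _ _ ((e / (c + 1) * vnorm h) * (c + 1))).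
  apply: ler_pM => //; apply: (le_trans H2); by rewrite lerDl.
by rewrite mulrAC divfK //; exact: lt0r_neq0.
Qed.

Lemma lo_linvan g s : van s -> lo (fun h => dot g h * s h).
Proof.
move=> V e ep; have gp : 0 < vnorm g + 1 by rewrite ltr_wpDl // vnorm_ge0.
have e2 : 0 < e / (vnorm g + 1) by rewrite divr_gt0.
apply: near0_imp (V _ e2) => h H; rewrite normrM.
apply: le_trans (_ : ((vnorm g + 1) * vnorm h) * (e / (vnorm g + 1)) <= _).
  apply: ler_pM => //; apply: le_trans (dot_bound _ _) _.
  by rewrite ler_wpM2r ?vnorm_ge0 // lerDl.
apply: eqle; field; exact: lt0r_neq0.
Qed.

Lemma bnd_van c s : van s -> bnd (fun h => c + s h).
Proof.
move=> V; exists (`|c| + 1); first by rewrite addr_ge0.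
apply: near0_imp (V 1 ltr01) => h H.
by apply: le_trans (ler_normD _ _) _; rewrite lerD2l.
Qed.

Lemma lo_van r : lo r -> van r.
Proof.
move=> L e ep; have [d dp H] := L 1 ltr01.
have [d' d'p [l1 l2]] := two_pos dp ep.
exists d' => // h hd; apply: le_trans (H _ (lt_le_trans hd l1)) _.
rewrite mul1r; apply: ltW; exact: lt_le_trans hd l2.
Qed.

Lemma van_lin g : van (fun h => dot g h).
Proof.
move=> e ep; have gp : 0 < vnorm g + 1 by rewrite ltr_wpDl // vnorm_ge0.
exists (e / (vnorm g + 1)); first by rewrite divr_gt0.
move=> h hd; apply: le_trans (dot_bound _ _) _.
apply: le_trans (_ : (vnorm g + 1) * vnorm h <= _).
  by rewrite ler_wpM2r ?vnorm_ge0 // lerDl.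
rewrite mulrC -ler_pdivlMr //; exact: ltW.
Qed.

Lemma van_add r s : van r -> van s -> van (fun h => r h + s h).
Proof.
move=> Lr Ls e ep; have e2 : 0 < e / 2 by rewrite divr_gt0.
apply: near0_imp (near0_and (Lr _ e2) (Ls _ e2)) => h [H1 H2].
apply: le_trans (ler_normD _ _) _; by rewrite [e]splitr lerD.
Qed.

Lemma lo_bndvan r s : lo r -> bnd s -> lo (fun h => r h * s h).
Proof. exact: lo_mulbnd. Qed.

End Near.

Section Grad.
Variable R : numFieldType.
Variable n : nat.
Local Notation V := 'cV[R]_(n + n).
Implicit Types (f g : V -> R) (x h a b : V).

Lemma gradE f x a : is_gradient f x a <-> lo (fun h => f (x + h) - f x - dot a h).
Proof. by []. Qed.

Lemma dotZr c a h : dot a (c *: h) = c * dot a h.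
Proof. by rewrite !dotE mulr_sumr; apply: eq_bigr => i _; rewrite mxE mulrCA. Qed.

Lemma dot_delta a (k : 'I_(n + n)) : dot a (delta_mx k 0) = a k 0.
Proof.
rewrite dotE (bigD1 k) //= big1 ?addr0 => [|i ik]; rewrite mxE.
  by rewrite !eqxx mulr1.
by rewrite (negbTE ik) mulr0.
Qed.

Lemma small0 (c : R) : (forall e, 0 < e -> `|c| <= e) -> c = 0.
Proof.
move=> H; apply/eqP; apply: contraT => c0.
have cp : 0 < `|c| by rewrite normr_gt0.
have := H (`|c| / 2) (divr_gt0 cp (ltr0Sn _ 1)).
rewrite ler_pdivlMr // ger_pMr //; move=> /le_lt_trans/(_ (ltr1n R 2)); by rewrite ltxx.
Qed.

Lemma grad_unique f x a b : is_gradient f x a -> is_gradient f x b -> a = b.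
Proof.
move=> /gradE Ha /gradE Hb.
have L : lo (fun h : V => dot (a - b) h).
  apply: lo_ext (lo_sub Hb Ha); exists 1 => // h _.
  by rewrite dotDl dotNl; ring.
apply/matrixP => k j; rewrite (ord1 j); apply/eqP; rewrite -subr_eq0; apply/eqP.
have -> : a k 0 - b k 0 = (a - b) k 0 by rewrite !mxE.
apply: small0 => e ep; have [d dp H] := L e ep.
have d2 : 0 < d / 2 by rewrite divr_gt0.
have hv : vnorm ((d / 2) *: (delta_mx k 0 : V)) = d / 2.
  by rewrite vnormZ vnorm_delta mulr1 gtr0_norm.
have := H ((d / 2) *: delta_mx k 0).
rewrite hv dotZr dot_delta normrM gtr0_norm //.
have -> : d / 2 < d by rewrite ltr_pdivrMr // ltr_pMr // ltr1n.
move=> /(_ isT); rewrite mulrC ler_pM2r //.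
Qed.

Lemma grad_van f x a : is_gradient f x a -> van (fun h => f (x + h) - f x).
Proof.
move=> G e ep; have := van_add (lo_van G) (van_lin a) ep.
by apply: near0_imp => h; rewrite subrK.
Qed.

Lemma grad_local f f' x a :
  near0 (fun h : V => f (x + h) = f' (x + h)) -> is_gradient f x a -> is_gradient f' x a.
Proof.
move=> [d dp E] G; have E0 : f x = f' x.
  by have := E 0; rewrite vnorm0 addr0 => ->.
apply: lo_ext G; exists d => // h /E ->; by rewrite E0.
Qed.

Lemma grad_ext f f' x a : f =1 f' -> is_gradient f x a -> is_gradient f' x a.
Proof. move=> E; apply: grad_local; exists 1 => // h _; exact: E. Qed.

Lemma lo0 : lo (fun _ : V => 0).
Proof. move=> e ep; exists 1 => // h _; by rewrite normr0 mulr_ge0 ?vnorm_ge0 // ltW. Qed.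

Lemma grad_const (c : R) x : is_gradient (fun _ => c) x 0.
Proof. apply/gradE; apply: lo_ext lo0; exists 1 => // h _; by rewrite dot0l; ring. Qed.

Lemma grad_coord (k : 'I_(n + n)) x : is_gradient (fun z : V => z k 0) x (delta_mx k 0).
Proof.
apply/gradE; apply: lo_ext lo0; exists 1 => // h _.
rewrite dotE (bigD1 k) //= big1 ?addr0 => [|i ik]; rewrite !mxE ?eqxx.
  by rewrite mul1r; ring.
by rewrite (negbTE ik) mul0r.
Qed.

Lemma grad_add f g x a b : is_gradient f x a -> is_gradient g x b ->
  is_gradient (fun z => f z + g z) x (a + b).
Proof.
move=> /gradE Ga /gradE Gb; apply/gradE; apply: lo_ext (lo_add Ga Gb); exists 1 => // h _.
by rewrite dotDl; ring.
Qed.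

Lemma grad_scale (c : R) f x a : is_gradient f x a ->
  is_gradient (fun z => c * f z) x (c *: a).
Proof.
move=> /gradE Ga; apply/gradE; apply: lo_ext (lo_scale c Ga); exists 1 => // h _.
by rewrite dotZl; ring.
Qed.

Lemma grad_opp f x a : is_gradient f x a -> is_gradient (fun z => - f z) x (- a).
Proof.
move=> Ga; apply: grad_ext (_ : forall z, -1 * f z = - f z) _; first by move=> z; ring.
by rewrite -scaleN1r; apply: grad_scale.
Qed.

Lemma grad_sub f g x a b : is_gradient f x a -> is_gradient g x b ->
  is_gradient (fun z => f z - g z) x (a - b).
Proof. by move=> Ga Gb; apply: grad_add => //; apply: grad_opp. Qed.

Lemma grad_sum (I : Type) (r : seq I) (F : I -> V -> R) (G : I -> V) x :
  (forall i, is_gradient (F i) x (G i)) ->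
  is_gradient (fun z => \sum_(i <- r) F i z) x (\sum_(i <- r) G i).
Proof.
move=> H; elim: r => [|i r IH].
  rewrite big_nil; apply: grad_ext (grad_const 0 x) => z; by rewrite big_nil.
rewrite big_cons; apply: grad_ext (grad_add (H i) IH) => z; by rewrite big_cons.
Qed.

Lemma grad_mul f g x a b : is_gradient f x a -> is_gradient g x b ->
  is_gradient (fun z => f z * g z) x (g x *: a + f x *: b).
Proof.
move=> Ga Gb.
have Vg := grad_van Gb.
move/gradE: Ga => Ga; move/gradE: Gb => Gb.
have L1 := lo_mulbnd Ga (bnd_van (g x) Vg).
have L2 := lo_linvan a Vg.
have L3 := lo_scale (f x) Gb.
apply/gradE; apply: lo_ext (lo_add (lo_add L1 L2) L3); exists 1 => // h _.
rewrite dotDl !dotZl; ring.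
Qed.

Lemma grad_inv g x b : is_gradient g x b -> g x != 0 ->
  is_gradient (fun z => (g z)^-1) x (- ((g x) ^- 2) *: b).
Proof.
move=> Gb gx0.
have Vg := grad_van Gb.
move/gradE: Gb => Gb.
have gp : 0 < `|g x| by rewrite normr_gt0.
have gp2 : 0 < `|g x| / 2 by rewrite divr_gt0.
have Nz : near0 (fun h : V => `|g x| / 2 <= `|g (x + h)|).
  apply: near0_imp (Vg _ gp2) => h H.
  have H' : `|g x| - `|g x - g (x + h)| <= `|g (x + h)|.
    have := lerB_dist (g x) (g x - g (x + h)).
    by rewrite (_ : g x - (g x - g (x + h)) = g (x + h)) //; ring.
  apply: le_trans H'; rewrite lerBrDl distrC; apply: (le_trans (lerD H (lexx _))).
  by rewrite -splitr.
have Bi : bnd (fun h : V => (g x)^-1 * (g (x + h))^-1).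
  exists (`|g x|^-1 * (`|g x| / 2)^-1); first by rewrite mulr_ge0 // invr_ge0 ltW.
  apply: near0_imp Nz => h H; rewrite normrM !normfV ler_pM2l ?invr_gt0 //.
  by rewrite lef_pV2 // ?posrE (lt_le_trans gp2).
have Bi2 : bnd (fun h : V => (g x)^-2 * (g (x + h))^-1).
  exists (`|g x|^-2 * (`|g x| / 2)^-1); first by rewrite mulr_ge0 // ?invr_ge0 ?exprn_ge0 // ltW.
  apply: near0_imp Nz => h H; rewrite normrM !normfV normrX ler_pM2l ?invr_gt0 ?exprn_gt0 //.
  by rewrite lef_pV2 // ?posrE (lt_le_trans gp2).
have L1 := lo_mulbnd Gb Bi.
have L2 := lo_mulbnd (lo_linvan b Vg) Bi2.
apply/gradE; apply: lo_ext (lo_sub L2 L1); apply: near0_imp Nz => h H.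
have gh0 : g (x + h) != 0 by rewrite -normr_gt0 (lt_le_trans gp2).
rewrite dotZl; field; by rewrite gh0 gx0.
Qed.

Lemma grad_div f g x a b : is_gradient f x a -> is_gradient g x b -> g x != 0 ->
  is_gradient (fun z => f z / g z) x ((g x)^-2 *: (g x *: a - f x *: b)).
Proof.
move=> Ga Gb gx0; have := grad_mul Ga (grad_inv Gb gx0).
have -> // : (g x)^-1 *: a + f x *: (- (g x ^- 2) *: b) = (g x)^-2 *: (g x *: a - f x *: b).
rewrite scalerBr !scalerA; congr (_ + _).
  by rewrite mulrC expr2 invfM mulrA mulfV ?mul1r.
by rewrite -scaleNr; congr (_ *: _); rewrite mulrC mulNr.
Qed.

End Grad.

Section MGrad.
Variable R : numFieldType.
Variable n : nat.
Local Notation N := (n + n)%N.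
Local Notation V := 'cV[R]_N.

Definition mgrad p q (F : V -> 'M[R]_(p, q)) (x : V) (dF : 'I_N -> 'M[R]_(p, q)) :=
  forall i j, is_gradient (fun z => F z i j) x (\col_k dF k i j).

Lemma mgrad_unique p q (F : V -> 'M[R]_(p, q)) x d1 d2 :
  mgrad F x d1 -> mgrad F x d2 -> forall k, d1 k = d2 k.
Proof.
move=> G1 G2 k; apply/matrixP => i j.
have := grad_unique (G1 i j) (G2 i j) => /matrixP /(_ k 0).
by rewrite !mxE.
Qed.

Lemma mgrad_local p q (F F' : V -> 'M[R]_(p, q)) x dF :
  near0 (fun h : V => F (x + h) = F' (x + h)) -> mgrad F x dF -> mgrad F' x dF.
Proof.
move=> E G i j; apply: grad_local (G i j); apply: near0_imp E => h ->; done.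
Qed.

Lemma mgrad_const p q (M : 'M[R]_(p, q)) x : mgrad (fun _ => M) x (fun _ => 0).
Proof.
move=> i j; have -> : (\col_k ((fun _ => 0 : 'M[R]_(p, q)) k i j) : V) = 0.
  by apply/matrixP => k l; rewrite !mxE.
exact: grad_const.
Qed.

Lemma mgrad_id x : mgrad (fun z : V => z) x (fun k => delta_mx k 0).
Proof.
move=> i j; rewrite (ord1 j).
have -> : (\col_k (delta_mx k 0 : V) i 0) = delta_mx i 0.
  by apply/matrixP => k l; rewrite !mxE (ord1 l) eq_sym.
exact: grad_coord.
Qed.

Lemma mgrad_add p q (F G : V -> 'M[R]_(p, q)) x dF dG :
  mgrad F x dF -> mgrad G x dG -> mgrad (fun z => F z + G z) x (fun k => dF k + dG k).
Proof.
move=> HF HG i j; have := grad_add (HF i j) (HG i j).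
have -> : (\col_k (dF k + dG k) i j) = \col_k dF k i j + \col_k dG k i j.
  by apply/matrixP => k l; rewrite !mxE.
by apply: grad_ext => z; rewrite mxE.
Qed.

Lemma mgrad_scale p q (c : R) (F : V -> 'M[R]_(p, q)) x dF :
  mgrad F x dF -> mgrad (fun z => c *: F z) x (fun k => c *: dF k).
Proof.
move=> HF i j; have := grad_scale c (HF i j).
have -> : (\col_k (c *: dF k) i j) = c *: \col_k dF k i j.
  by apply/matrixP => k l; rewrite !mxE.
by apply: grad_ext => z; rewrite mxE.
Qed.

Lemma mgrad_opp p q (F : V -> 'M[R]_(p, q)) x dF :
  mgrad F x dF -> mgrad (fun z => - F z) x (fun k => - dF k).
Proof.
move=> HF i j; have := HF i j => /grad_opp.
have -> : (\col_k (- dF k) i j) = - \col_k dF k i j.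
  by apply/matrixP => k l; rewrite !mxE.
by apply: grad_ext => z; rewrite mxE.
Qed.

Lemma mgrad_sub p q (F G : V -> 'M[R]_(p, q)) x dF dG :
  mgrad F x dF -> mgrad G x dG -> mgrad (fun z => F z - G z) x (fun k => dF k - dG k).
Proof. by move=> HF HG; apply: mgrad_add => //; apply: mgrad_opp. Qed.

Lemma mgrad_tr p q (F : V -> 'M[R]_(p, q)) x dF :
  mgrad F x dF -> mgrad (fun z => (F z)^T) x (fun k => (dF k)^T).
Proof.
move=> HF i j; have := HF j i.
have -> : (\col_k (dF k)^T i j) = \col_k dF k j i.
  by apply/matrixP => k l; rewrite !mxE.
by apply: grad_ext => z; rewrite mxE.
Qed.

Lemma mgrad_mul p q r (F : V -> 'M[R]_(p, q)) (G : V -> 'M[R]_(q, r)) x dF dG :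
  mgrad F x dF -> mgrad G x dG ->
  mgrad (fun z => F z *m G z) x (fun k => dF k *m G x + F x *m dG k).
Proof.
move=> HF HG i j.
have := grad_sum (index_enum 'I_q) (fun l => grad_mul (HF i l) (HG l j)).
have -> : \sum_(l <- index_enum 'I_q)
   (G x l j *: (\col_k dF k i l) + F x i l *: (\col_k dG k l j))
  = \col_k (dF k *m G x + F x *m dG k) i j.
  apply/matrixP => k c; rewrite !mxE summxE -big_split /=.
  apply: eq_bigr => l _; rewrite !mxE; ring.
by apply: grad_ext => z; rewrite mxE.
Qed.

Lemma mgrad_linear p q (L : V -> 'M[R]_(p, q)) (M : 'I_N -> 'M[R]_(p, q)) x :
  (forall z, L z = \sum_k z k 0 *: M k) -> mgrad L x M.
Proof.
move=> E i j.
have := grad_sum (index_enum 'I_N)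
  (fun k => grad_scale (M k i j) (grad_coord k x)).
have -> : \sum_(k <- index_enum 'I_N) M k i j *: (delta_mx k 0 : V) = \col_k M k i j.
  apply/matrixP => k c; rewrite (ord1 c) !mxE summxE (bigD1 k) //= big1 ?addr0.
    by rewrite !mxE !eqxx mulr1.
  by move=> l lk; rewrite !mxE eq_sym (negbTE lk) mulr0.
by apply: grad_ext => z; rewrite E summxE; apply: eq_bigr => k _; rewrite !mxE mulrC.
Qed.

End MGrad.

Section MP.
Variable R : numFieldType.
Variable n : nat.
Local Notation N := (n + n)%N.
Local Notation V := 'cV[R]_N.
Local Notation MP := {mpoly R[N]}.

Lemma grad_eq (f f' : V -> R) x a b : f =1 f' -> a = b ->
  is_gradient f x a -> is_gradient f' x b.
Proof. by move=> E <-; apply: grad_ext. Qed.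

Definition ev (z : V) : 'I_N -> R := fun i => z i 0.

Definition Pg (p : MP) := forall x : V,
  is_gradient (fun z : V => p.@[ev z]) x (\col_k (mderiv k p).@[ev x]).

Lemma PgC (c : R) : Pg c%:MP.
Proof.
move=> x; apply: grad_eq (grad_const c x) => [z|]; first by rewrite mevalC.
by apply/matrixP => k l; rewrite !mxE mderivC meval0.
Qed.

Lemma Pg0 : Pg 0.
Proof. by have := PgC 0; rewrite mpolyC0. Qed.

Lemma PgX (i : 'I_N) : Pg 'X_i.
Proof.
move=> x; apply: grad_eq (grad_coord i x) => [z|]; first by rewrite mevalXU.
apply/matrixP => k l; rewrite (ord1 l) !mxE mderivX mnm1E.
case: (eqVneq i k) => [->|ik] /=.
  have -> : (U_(k) - U_(k))%MM = 0%MM by apply/mnmP => j; rewrite mnmBE subnn mnm0E.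
  by rewrite mpolyX0 scale1r meval1.
by rewrite scale0r meval0.
Qed.

Lemma PgD p q : Pg p -> Pg q -> Pg (p + q).
Proof.
move=> Hp Hq x; apply: grad_eq (grad_add (Hp x) (Hq x)) => [z|]; first by rewrite mevalD.
by apply/matrixP => k l; rewrite !mxE mderivD mevalD.
Qed.

Lemma PgM p q : Pg p -> Pg q -> Pg (p * q).
Proof.
move=> Hp Hq x; apply: grad_eq (grad_mul (Hp x) (Hq x)) => [z|]; first by rewrite mevalM.
by apply/matrixP => k l; rewrite !mxE mderivM mevalD !mevalM; ring.
Qed.

Lemma PgX_exp (i : 'I_N) k : Pg ('X_i ^+ k).
Proof.
elim: k => [|k IH]; first by rewrite expr0 -mpolyC1; apply: PgC.
by rewrite exprS; apply: PgM => //; apply: PgX.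
Qed.

Lemma Pg_prod (I : Type) (r : seq I) (F : I -> MP) :
  (forall i, Pg (F i)) -> Pg (\prod_(i <- r) F i).
Proof.
move=> H; elim: r => [|a r IH]; first by rewrite big_nil -mpolyC1; apply: PgC.
by rewrite big_cons; apply: PgM.
Qed.

Lemma Pg_all p : Pg p.
Proof.
elim/mpolyind: p => [|c m p _ _ IH]; first exact: Pg0.
apply: PgD => //; rewrite -mul_mpolyC; apply: PgM; first exact: PgC.
rewrite mpolyXE_id; apply: Pg_prod => i; exact: PgX_exp.
Qed.

Definition ratd (k : 'I_N) (P Q : MP) : MP := mderiv k P * Q - P * mderiv k Q.

Lemma grad_rat (P Q : MP) (x : V) : Q.@[ev x] != 0 ->
  is_gradient (fun z => P.@[ev z] / Q.@[ev z]) x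
    (\col_k ((ratd k P Q).@[ev x] / (Q * Q).@[ev x])).
Proof.
move=> Q0; apply: grad_eq (grad_div (Pg_all P x) (Pg_all Q x) Q0) => // .
apply/matrixP => k l; rewrite !mxE /ratd mevalB !mevalM.
by field.
Qed.

End MP.

Section Alg.
Variable R : numFieldType.
Variable n : nat.
Hypothesis n0 : (0 < n)%N.
Local Notation N := (n + n)%N.
Local Notation V := 'cV[R]_N.
Local Notation P := (Pshift R n).
Local Notation A := (Amat R n).

Lemma PshiftE (i j : 'I_n) : P i j = ((j == ordS i) : nat)%:R.
Proof. by rewrite mxE. Qed.

Lemma sumP_l (F : 'I_n -> R) (j : 'I_n) : \sum_m P m j * F m = F (ord_pred j).
Proof.
rewrite (bigD1 (ord_pred j)) //= PshiftE ord_predK eqxx mul1r big1 ?addr0 //.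
move=> m mj; rewrite PshiftE; case: eqP => [E|]; last by rewrite mul0r.
by case/eqP: mj; rewrite E ordSK.
Qed.

Lemma sumP_r (F : 'I_n -> R) (i : 'I_n) : \sum_m P i m * F m = F (ordS i).
Proof.
rewrite (bigD1 (ordS i)) //= PshiftE eqxx mul1r big1 ?addr0 //.
by move=> m mi; rewrite PshiftE (negbTE mi) mul0r.
Qed.

Lemma trP_mul q (M : 'M[R]_(n, q)) i j : (P^T *m M) i j = M (ord_pred i) j.
Proof. rewrite mxE -(sumP_l (fun m => M m j)); apply: eq_bigr => m _; by rewrite mxE. Qed.

Lemma mul_P q (M : 'M[R]_(q, n)) i j : (M *m P) i j = M i (ord_pred j).
Proof. rewrite mxE -(sumP_l (fun m => M i m)); apply: eq_bigr => m _; by rewrite mulrC. Qed.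

Lemma val_pred (i : 'I_n) : (ord_pred i : nat) = ((i + n.-1) %% n)%N.
Proof. rewrite /=; congr (_ %% _)%N; by case: n n0 i => // k _ i; rewrite addnS. Qed.

Lemma Xmat_tr (z : V) : (Xmat z)^T = Xmat z.
Proof.
apply/matrixP => i j; rewrite !mxE; congr (z _ 0); congr (lshift _ _).
by apply: val_inj => /=; rewrite addnC.
Qed.

Lemma Jmat_tr (z : V) : (Jmat z)^T = - Jmat z.
Proof.
by rewrite /Jmat tr_block_mx !trmx0 linearN /= Xmat_tr opp_block_mx !oppr0 opprK.
Qed.

Lemma addmod_val (i j : 'I_n) : (ord_addmod i j : nat) = ((i + j) %% n)%N.
Proof. by []. Qed.

Lemma pred_addmod (i j : 'I_n) :
  ord_pred (ord_addmod i j) = ord_addmod (ord_pred i) j.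
Proof.
apply: val_inj; change (nat_of_ord (ord_pred (ord_addmod i j)) = nat_of_ord (ord_addmod (ord_pred i) j)); rewrite val_pred !addmod_val val_pred.
by rewrite !modnDml addnAC.
Qed.

Lemma addmod_pred (i j : 'I_n) :
  ord_addmod (ord_pred i) j = ord_addmod i (ord_pred j).
Proof.
apply: val_inj; change (nat_of_ord (ord_addmod (ord_pred i) j) = nat_of_ord (ord_addmod i (ord_pred j))); rewrite !addmod_val !val_pred.
by rewrite modnDml modnDmr addnAC addnA.
Qed.

Lemma Amat_tr : A^T = block_mx P^T 0 0 P^T.
Proof. by rewrite /Amat tr_block_mx !trmx0. Qed.

Lemma Xmat_AT (z : V) : Xmat (A^T *m z) = P^T *m Xmat z.
Proof.
apply/matrixP => i j; rewrite trP_mul.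
have -> : (Xmat (A^T *m z)) i j = (A^T *m z) (lshift n (ord_addmod i j)) 0 by rewrite mxE.
rewrite Amat_tr -{1}(vsubmxK z) mul_block_col col_mxEu mul0mx addr0.
rewrite trP_mul !mxE pred_addmod; done.
Qed.

Lemma Jmat_AT (z : V) : Jmat (A^T *m z) = A^T *m Jmat z.
Proof.
rewrite /Jmat Xmat_AT Amat_tr mulmx_block.
by rewrite !mul0mx !mulmx0 !add0r !addr0 mulmxN.
Qed.

Lemma trP_X (z : V) : P^T *m Xmat z = Xmat z *m P.
Proof.
apply/matrixP => i j; rewrite trP_mul mul_P !mxE addmod_pred; done.
Qed.

Lemma AT_J (z : V) : A^T *m Jmat z = Jmat z *m A.
Proof.
rewrite /Jmat Amat_tr /Amat !mulmx_block.
rewrite !mul0mx !mulmx0 !add0r !addr0 mulmxN mulNmx trP_X; done.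
Qed.

Lemma Xmat_add (z w : V) : Xmat (z + w) = Xmat z + Xmat w.
Proof. by apply/matrixP => i j; rewrite !mxE. Qed.
Lemma Xmat_scale (c : R) (z : V) : Xmat (c *: z) = c *: Xmat z.
Proof. by apply/matrixP => i j; rewrite !mxE. Qed.

Lemma Jmat_add (z w : V) : Jmat (z + w) = Jmat z + Jmat w.
Proof. by rewrite /Jmat Xmat_add add_block_mx !addr0 opprD. Qed.
Lemma Jmat_scale (c : R) (z : V) : Jmat (c *: z) = c *: Jmat z.
Proof. by rewrite /Jmat Xmat_scale scale_block_mx !scaler0 scalerN. Qed.
Lemma Jmat0 : Jmat (0 : V) = 0.
Proof. by have := Jmat_scale 0 0; rewrite !scale0r. Qed.

Lemma Jmat_sum (I : Type) (r : seq I) (F : I -> V) :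
  Jmat (\sum_(i <- r) F i) = \sum_(i <- r) Jmat (F i).
Proof.
elim: r => [|a r IH]; first by rewrite !big_nil Jmat0.
by rewrite !big_cons Jmat_add IH.
Qed.

Lemma col_sum_delta (z : V) : z = \sum_k z k 0 *: delta_mx k 0.
Proof.
apply/matrixP => i j; rewrite (ord1 j) summxE (bigD1 i) //= big1 ?addr0.
  by rewrite !mxE !eqxx mulr1.
by move=> k ki; rewrite !mxE eq_sym (negbTE ki) mulr0.
Qed.

Lemma Jmat_lin (z : V) : Jmat z = \sum_k z k 0 *: Jmat (delta_mx k 0).
Proof.
by rewrite {1}(col_sum_delta z) Jmat_sum; apply: eq_bigr => k _; rewrite Jmat_scale.
Qed.

End Alg.

Section Rep.
Variable R : numFieldType.
Variable n : nat.
Local Notation N := (n + n)%N.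
Local Notation V := 'cV[R]_N.
Local Notation MP := {mpoly R[N]}.
Variable H : 'M[R]_N.
Variable eps : R.

Definition Xhat : 'M[MP]_n := \matrix_(i, j) 'X_(lshift n (ord_addmod i j)).
Definition Jhat : 'M[MP]_N := block_mx 0 Xhat (- Xhat) 0.
Definition cmx p q (M : 'M[R]_(p, q)) : 'M[MP]_(p, q) := map_mx (fun c : R => c%:MP) M.
Definition Dhat : 'M[MP]_N :=
  1%:M - (eps ^+ 2)%:MP *: ((Jhat *m cmx H) *m (Jhat *m cmx H)).
Definition Qhat : MP := \det Dhat.
Definition Xcol : 'cV[MP]_N := \col_i 'X_i.
Definition Vhat : 'cV[MP]_N := \adj Dhat *m Xcol.
Definition Phat (C : 'M[R]_N) : MP := ((Xcol^T *m cmx (C *m H)) *m Vhat) 0 0.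

Definition Dm (z : V) := Dmat H z eps.
Definition Fc (C : 'M[R]_N) (z : V) : R :=
  (z^T *m (C *m H) *m invmx (Dm z) *m z) 0 0.
Definition Vf (z : V) : V := invmx (Dm z) *m z.

Lemma mevM (z : V) p q r (A : 'M[MP]_(p, q)) (B : 'M[MP]_(q, r)) :
  map_mx (meval (ev z)) (A *m B) = map_mx (meval (ev z)) A *m map_mx (meval (ev z)) B.
Proof. exact: map_mxM. Qed.
Lemma mevAdj (z : V) (A : 'M[MP]_N) :
  map_mx (meval (ev z)) (\adj A) = \adj (map_mx (meval (ev z)) A).
Proof. exact: map_mx_adj. Qed.

Lemma map_cmx (z : V) p q (M : 'M[R]_(p, q)) : map_mx (meval (ev z)) (cmx M) = M.
Proof. by apply/matrixP => i j; rewrite !mxE mevalC. Qed.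

Lemma map_Xcol (z : V) : map_mx (meval (ev z)) Xcol = z.
Proof. by apply/matrixP => i j; rewrite !mxE mevalXU (ord1 j). Qed.

Lemma map_Jhat (z : V) : map_mx (meval (ev z)) Jhat = Jmat z.
Proof.
rewrite /Jhat map_block_mx !map_mx0 map_mxN; congr block_mx.
  by apply/matrixP => i j; rewrite !mxE mevalXU.
by apply/matrixP => i j; rewrite !mxE /= mevalXU.
Qed.

Lemma map_Dhat (z : V) : map_mx (meval (ev z)) Dhat = Dm z.
Proof.
rewrite /Dhat /Dm /Dmat map_mxB map_mx1 map_mxZ !map_mxM map_Jhat map_cmx.
by rewrite /= mevalC.
Qed.

Lemma Q_ev (z : V) : Qhat.@[ev z] = \det (Dm z).
Proof. by rewrite /Qhat -det_map_mx map_Dhat. Qed.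

Lemma invmx_rep (z : V) : \det (Dm z) != 0 ->
  invmx (Dm z) = (Qhat.@[ev z])^-1 *: \adj (Dm z).
Proof.
by move=> d0; rewrite /invmx unitmxE unitfE d0 Q_ev.
Qed.

Lemma map_Vhat (z : V) : map_mx (meval (ev z)) Vhat = \adj (Dm z) *m z.
Proof. by rewrite /Vhat mevM mevAdj map_Dhat map_Xcol. Qed.

Lemma V_rep (z : V) j : \det (Dm z) != 0 ->
  Vf z j 0 = (Vhat j 0).@[ev z] / Qhat.@[ev z].
Proof.
move=> d0; rewrite /Vf invmx_rep // -scalemxAl mxE mulrC.
by rewrite -map_Vhat mxE.
Qed.

Lemma map_Phat (C : 'M[R]_N) (z : V) :
  (Phat C).@[ev z] = (z^T *m (C *m H) *m (\adj (Dm z) *m z)) 0 0.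
Proof.
rewrite /Phat.
have E : map_mx (meval (ev z)) (Xcol^T *m cmx (C *m H) *m Vhat)
   = (z^T *m (C *m H) *m (\adj (Dm z) *m z)).
  by rewrite (mevM _ (_ *m _) Vhat) map_Vhat mevM map_cmx -map_trmx map_Xcol.
by move: (congr1 (fun M : 'M_1 => M 0 0) E); rewrite mxE.
Qed.

Lemma F_rep (C : 'M[R]_N) (z : V) : \det (Dm z) != 0 ->
  Fc C z = (Phat C).@[ev z] / Qhat.@[ev z].
Proof.
move=> d0; rewrite /Fc invmx_rep // map_Phat -scalemxAr -mulmxA -scalemxAl mxE mulrC.
by rewrite !mulmxA.
Qed.

End Rep.

Section Deriv.
Variable R : numFieldType.
Variable n : nat.
Local Notation N := (n + n)%N.
Local Notation V := 'cV[R]_N.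
Local Notation MP := {mpoly R[N]}.
Variable H : 'M[R]_N.
Variable eps : R.
Local Notation D := (Dm H eps).
Local Notation VV := (Vf H eps).
Local Notation Q := (Qhat H eps).

Lemma mgrad_eq p q (F : V -> 'M[R]_(p, q)) x d1 d2 :
  mgrad F x d1 -> (forall k, d1 k = d2 k) -> mgrad F x d2.
Proof.
move=> G E i j; have -> : (\col_k d2 k i j) = \col_k d1 k i j.
  by apply/matrixP => k l; rewrite !mxE E.
exact: G.
Qed.

Lemma grad_nz (f : V -> R) y a : is_gradient f y a -> f y != 0 ->
  near0 (fun h : V => f (y + h) != 0).
Proof.
move=> G f0; have gp : 0 < `|f y| / 2 by rewrite divr_gt0 ?normr_gt0.
apply: (near0_imp _ (grad_van G gp)) => h Hh; apply/eqP => E.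
move: Hh; rewrite E sub0r normrN ler_pdivlMr // ger_pMr ?normr_gt0 //.
by move=> /le_lt_trans/(_ (ltr1n R 2)); rewrite ltxx.
Qed.

Lemma Q_near (y : V) : \det (D y) != 0 -> near0 (fun h : V => \det (D (y + h)) != 0).
Proof.
move=> d0; have := grad_nz (Pg_all Q y); rewrite Q_ev => /(_ d0).
by apply: near0_imp => h; rewrite Q_ev.
Qed.

Definition dV (y : V) (k : 'I_N) : V :=
  \col_j ((ratd k (Vhat H eps j 0) Q).@[ev y] / (Q * Q).@[ev y]).

Lemma mgrad_V (y : V) : \det (D y) != 0 -> mgrad VV y (dV y).
Proof.
move=> d0 j c; rewrite (ord1 c).
have Q0 : Q.@[ev y] != 0 by rewrite Q_ev.
have G := grad_rat (Vhat H eps j 0) Q0.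
have -> : (\col_k dV y k j 0) =
   \col_k ((ratd k (Vhat H eps j 0) Q).@[ev y] / (Q * Q).@[ev y]).
  by apply/matrixP => k l; rewrite !mxE.
apply: grad_local G; apply: near0_imp (Q_near d0) => h h0.
by rewrite V_rep.
Qed.

Definition dJ (k : 'I_N) : 'M[R]_N := Jmat (delta_mx k 0 : V).

Definition dD (y : V) (k : 'I_N) : 'M[R]_N :=
  - (eps ^+ 2 *: (dJ k *m H *m (Jmat y *m H) + Jmat y *m H *m (dJ k *m H))).

Lemma mgrad_J (y : V) : mgrad (fun z : V => Jmat z) y dJ.
Proof. apply: mgrad_linear => z; exact: Jmat_lin. Qed.

Lemma mgrad_D (y : V) : mgrad D y (dD y).
Proof.
have G1 := mgrad_mul (mgrad_J y) (mgrad_const H y).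
have G2 := mgrad_mul G1 G1.
have G3 := mgrad_sub (mgrad_const 1%:M y) (mgrad_scale (eps ^+ 2) G2).
have G4 : mgrad D y _ := G3.
apply: (mgrad_eq G4) => k; rewrite /dD !mulmx0 !addr0 sub0r; done.
Qed.

Lemma DV_rel (y : V) (k : 'I_N) : \det (D y) != 0 ->
  dD y k *m VV y + D y *m dV y k = delta_mx k 0.
Proof.
move=> d0; have G := mgrad_mul (mgrad_D y) (mgrad_V d0).
have G' : mgrad (fun z : V => z) y
             (fun k => dD y k *m VV y + D y *m dV y k).
  apply: mgrad_local G; apply: near0_imp (Q_near d0) => h h0.
  by rewrite /Vf mulKVmx // unitmxE unitfE.
by have := mgrad_unique G' (mgrad_id y) k.
Qed.

Definition gF (C : 'M[R]_N) (y : V) : V :=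
  \col_k (((delta_mx k 0 : V)^T *m (C *m H) *m VV y
           + y^T *m (C *m H) *m dV y k) 0 0).

Lemma grad_F (C : 'M[R]_N) (y : V) : \det (D y) != 0 ->
  is_gradient (Fc H eps C) y (gF C y).
Proof.
move=> d0.
have G1 := mgrad_mul (mgrad_tr (mgrad_id y)) (mgrad_const (C *m H) y).
have G2 := mgrad_mul G1 (mgrad_V d0).
have := G2 0 0; apply: grad_eq => [z|].
  by rewrite /Fc /Vf !mulmxA.
by apply/matrixP => k l; rewrite !mxE !mulmx0 !addr0.
Qed.

End Deriv.

Section Key.
Variable R : numFieldType.
Variable n : nat.
Local Notation N := (n + n)%N.
Local Notation V := 'cV[R]_N.
Variable H : 'M[R]_N.
Hypothesis Hsym : H^T = H.
Variable eps : R.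
Local Notation D := (Dm H eps).
Local Notation VV := (Vf H eps).

Definition prop (C : 'M[R]_N) :=
  [/\ C *m H = H *m C^T, (forall z : V, C^T *m Jmat z = Jmat z *m C)
    & (forall z : V, Jmat (C^T *m z) = C^T *m Jmat z)].

Lemma S_sym C : prop C -> (C *m H)^T = C *m H.
Proof. by case=> P1 _ _; rewrite trmx_mul Hsym P1. Qed.

Lemma comm_W C (z : V) : prop C ->
  C *m H *m (Jmat z *m H *m (Jmat z *m H)) = H *m Jmat z *m (H *m Jmat z) *m (C *m H).
Proof.
case=> P1 P2 _; set J := Jmat z.
rewrite !mulmxA P1 -(mulmxA H) P2 !mulmxA -(mulmxA _ C) P1 !mulmxA.
by rewrite -(mulmxA _ C^T) P2 !mulmxA.
Qed.

Lemma D_tr (z : V) : (D z)^T = 1%:M - eps ^+ 2 *: (H *m Jmat z *m (H *m Jmat z)).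
Proof.
rewrite /Dm /Dmat linearB /= trmx1 linearZ /= !trmx_mul Jmat_tr Hsym.
by rewrite !mulmxN !mulNmx opprK !mulmxA.
Qed.

Lemma SD C (z : V) : prop C -> C *m H *m D z = (D z)^T *m (C *m H).
Proof.
move=> PC; rewrite D_tr /Dm /Dmat mulmxBr mulmxBl mulmx1 mul1mx.
by rewrite -!scalemxAr -!scalemxAl comm_W.
Qed.

Lemma invSD C (y : V) : prop C -> D y \in unitmx ->
  invmx (D y)^T *m (C *m H) = C *m H *m invmx (D y).
Proof.
move=> PC U; have UT : (D y)^T \in unitmx by rewrite unitmx_tr.
rewrite -{1}(mulmxK U (invmx (D y)^T *m (C *m H))) -(mulmxA _ (C *m H)) SD //.
by rewrite (mulKmx UT).
Qed.

Lemma key3 C (y : V) : prop C -> D y \in unitmx ->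
  y^T *m (C *m H) *m invmx (D y) = (C *m H *m VV y)^T.
Proof.
move=> PC U; rewrite /Vf trmx_mul S_sym // trmx_mul trmx_inv.
by rewrite -[RHS]mulmxA invSD // !mulmxA.
Qed.

Definition gop (y : V) (A : 'M[R]_N) : 'M[R]_N :=
  - (eps ^+ 2 *: (A *m H *m (Jmat y *m H) + Jmat y *m H *m (A *m H))).

Lemma dD_gop (y : V) k : dD H eps y k = gop y (dJ R k).
Proof. by []. Qed.

Lemma gop_lin (y : V) (a : R) A B : gop y (a *: A + B) = a *: gop y A + gop y B.
Proof.
rewrite /gop !mulmxDl !mulmxDr -!scalemxAl -!scalemxAr.
rewrite !scalerDr !scalerN !scalerA -opprD; congr (- _).
rewrite !scalerDr !scalerA (mulrC a); rewrite -!addrA; congr (_ + _).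
by rewrite addrCA.
Qed.

Lemma gop0 (y : V) : gop y 0 = 0.
Proof. by rewrite /gop !mul0mx !mulmx0 addr0 scaler0 oppr0. Qed.

Lemma gop_sum (y : V) (I : Type) (r : seq I) (a : I -> R) (A : I -> 'M[R]_N) :
  gop y (\sum_(i <- r) a i *: A i) = \sum_(i <- r) a i *: gop y (A i).
Proof.
elim: r => [|i r IH]; first by rewrite !big_nil gop0.
by rewrite !big_cons gop_lin IH.
Qed.

Lemma sum_dJ C (k : 'I_N) : prop C -> \sum_l C k l *: dJ R l = C^T *m dJ R k.
Proof.
case=> _ _ P3; rewrite /dJ -P3.
under eq_bigr do rewrite -Jmat_scale.
rewrite -Jmat_sum; congr Jmat.
rewrite [in RHS](col_sum_delta (C^T *m _)); apply: eq_bigr => l _; congr (_ *: _).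
rewrite mxE (bigD1 k) //= big1 ?addr0 => [|m mk]; rewrite !mxE ?eqxx ?mulr1 //.
by rewrite (negbTE mk) mulr0.
Qed.

Lemma CT_gop C (y : V) A : prop C -> C^T *m gop y A = gop y (C^T *m A).
Proof.
move=> PC; have [P1 P2 _] := PC.
rewrite /gop mulmxN -scalemxAr mulmxDr; congr (- (_ *: (_ + _))).
  by rewrite !mulmxA.
by rewrite !mulmxA P2 -(mulmxA _ C) P1 !mulmxA.
Qed.

Lemma sum_dD C (y : V) (k : 'I_N) : prop C ->
  \sum_l C k l *: dD H eps y l = C^T *m dD H eps y k.
Proof.
move=> PC; under eq_bigr do rewrite dD_gop.
by rewrite -gop_sum sum_dJ // dD_gop CT_gop.
Qed.

Lemma trE1 (W : V) k : ((delta_mx k 0 : V)^T *m W) 0 0 = W k 0.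
Proof.
rewrite mxE (bigD1 k) //= big1 ?addr0 => [|m mk]; rewrite !mxE ?eqxx ?mul1r //.
by rewrite (negbTE mk) mul0r.
Qed.

Lemma trE2 (W : V) k : (W^T *m (delta_mx k 0 : V)) 0 0 = W k 0.
Proof.
rewrite mxE (bigD1 k) //= big1 ?addr0 => [|m mk]; rewrite !mxE ?eqxx ?mulr1 //.
by rewrite (negbTE mk) mulr0.
Qed.

Lemma addE11 (A B : 'M[R]_1) : (A + B) 0 0 = A 0 0 + B 0 0.
Proof. by rewrite mxE. Qed.
Lemma subE11 (A B : 'M[R]_1) : (A - B) 0 0 = A 0 0 - B 0 0.
Proof. by rewrite !mxE. Qed.

Lemma gF_form C (y : V) : prop C -> D y \in unitmx ->
  gF H eps C y = \col_k (2 * (C *m H *m VV y) k 0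
                   - ((C *m H *m VV y)^T *m dD H eps y k *m VV y) 0 0).
Proof.
move=> PC U; apply/matrixP => k c; rewrite (ord1 c) /gF [in LHS]mxE [in RHS]mxE.
have d0 : \det (D y) != 0 by rewrite -unitfE -unitmxE.
have E : D y *m dV H eps y k = delta_mx k 0 - dD H eps y k *m VV y.
  by rewrite -(DV_rel k d0) addrAC subrr add0r.
have -> : dV H eps y k = invmx (D y) *m (delta_mx k 0 - dD H eps y k *m VV y).
  by rewrite -E mulKmx.
rewrite (mulmxA (y^T *m (C *m H))) key3 // mulmxBr addE11 subE11.
rewrite -(mulmxA _ (C *m H) (VV y)) trE1 trE2 -!mulmxA.
rewrite mulr2n mulrDl mul1r addrA; done.
Qed.

Lemma prop1 : prop 1%:M.
Proof.
split; first by rewrite trmx1 mul1mx mulmx1.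
  by move=> z; rewrite trmx1 mul1mx mulmx1.
by move=> z; rewrite trmx1 !mul1mx.
Qed.

Lemma gF_rel C (y : V) : prop C -> D y \in unitmx ->
  gF H eps C y = C *m gF H eps 1%:M y.
Proof.
move=> PC U; rewrite (gF_form PC U) (gF_form prop1 U) mul1mx.
set W := \col_l (((H *m VV y)^T *m dD H eps y l *m VV y) 0 0).
have E1 : \col_k0 (2 * (H *m VV y) k0 0
             - ((H *m VV y)^T *m dD H eps y k0 *m VV y) 0 0) = 2 *: (H *m VV y) - W.
  by apply/matrixP => k c; rewrite (ord1 c) !mxE.
have E2 : C *m W = \col_k (((C *m H *m VV y)^T *m dD H eps y k *m VV y) 0 0).
  apply/matrixP => k c; rewrite (ord1 c) [RHS]mxE.
  have T : (C *m H *m VV y)^T = (H *m VV y)^T *m C^T by rewrite -mulmxA trmx_mul.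
  rewrite T -(mulmxA _ C^T) -(sum_dD _ _ PC) mulmx_sumr mulmx_suml summxE.
  rewrite [LHS]mxE; apply: eq_bigr => l _.
  by rewrite -scalemxAr -scalemxAl [RHS]mxE mxE.
rewrite E1 mulmxBr E2 -scalemxAr (mulmxA C H (VV y)).
by apply/matrixP => k c; rewrite (ord1 c) !mxE.
Qed.

End Key.

Section Hess.
Variable R : numFieldType.
Variable n : nat.
Local Notation N := (n + n)%N.
Local Notation V := 'cV[R]_N.
Local Notation MP := {mpoly R[N]}.
Variable H : 'M[R]_N.
Variable eps : R.
Local Notation D := (Dm H eps).
Local Notation Q := (Qhat H eps).

Definition cn (C : 'M[R]_N) : R := \sum_i \sum_j `|C i j|.

Lemma vnorm_mul (C : 'M[R]_N) (v : V) : vnorm (C *m v) <= cn C * vnorm v.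
Proof.
rewrite /vnorm /cn mulr_suml; apply: ler_sum => i _; rewrite mxE mulr_suml.
apply: le_trans (ler_norm_sum _ _ _) _; apply: ler_sum => j _.
rewrite normrM ler_wpM2l //; exact: vnorm_coord.
Qed.

Lemma cn_ge0 C : 0 <= cn C.
Proof. by rewrite /cn sumr_ge0 // => i _; rewrite sumr_ge0. Qed.

Definition jac (G : V -> V) (x : V) (M : 'M[R]_N) :=
  forall e : R, 0 < e -> exists2 d' : R, 0 < d' &
    forall h : V, vnorm h < d' -> vnorm (G (x + h) - G x - M *m h) <= e * vnorm h.

Lemma jac_mul (C : 'M[R]_N) G x M : jac G x M -> jac (fun z => C *m G z) x (C *m M).
Proof.
move=> J e ep; have cp : 0 < cn C + 1 by rewrite ltr_wpDl ?cn_ge0.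
have [d dp Hd] := J (e / (cn C + 1)) (divr_gt0 ep cp).
exists d => // h /Hd Hh.
have -> : C *m G (x + h) - C *m G x - C *m M *m h = C *m (G (x + h) - G x - M *m h).
  by rewrite !mulmxBr mulmxA.
apply: le_trans (vnorm_mul _ _) _.
apply: le_trans (_ : (cn C + 1) * (e / (cn C + 1) * vnorm h) <= _).
  apply: ler_pM => //; [exact: cn_ge0 | exact: vnorm_ge0 | by rewrite lerDl].
apply: eqle; field; exact: lt0r_neq0.
Qed.

Lemma jac_entry G x M (k : 'I_N) : jac G x M ->
  is_gradient (fun z => G z k 0) x (\col_l M k l).
Proof.
move=> J; apply/gradE => e ep; have [d dp Hd] := J e ep.
exists d => // h /Hd Hh; apply: le_trans Hh.
have -> : G (x + h) k 0 - G x k 0 - dot (\col_l M k l) h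
   = (G (x + h) - G x - M *m h) k 0.
  rewrite !mxE dotE; congr (_ - _); apply: eq_bigr => l _; by rewrite mxE.
exact: vnorm_coord.
Qed.

Definition Gr (C : 'M[R]_N) (y : V) : V :=
  \col_k ((ratd k (Phat H eps C) Q).@[ev y] / (Q * Q).@[ev y]).

Lemma ratd_sym (P Q' : MP) k l :
  ratd l (ratd k P Q') (Q' * Q') = ratd k (ratd l P Q') (Q' * Q').
Proof.
rewrite /ratd !mderivB !mderivM (mderiv_comm k l P) (mderiv_comm k l Q').
ring.
Qed.

Lemma hess_sym C (x : V) (M : 'M[R]_N) (G : V -> V) (d : R) :
  \det (D x) != 0 -> 0 < d ->
  (forall y : V, vnorm (y - x) < d -> is_gradient (Fc H eps C) y (G y)) ->
  jac G x M -> M^T = M.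
Proof.
move=> d0 dp HG J.
have [d1 d1p Hd1] := Q_near d0.
have d12 : 0 < d1 / 2 by rewrite divr_gt0.
have [d2 d2p [l1 l2]] := two_pos dp d12.
have Ehalf : d1 / 2 + d1 / 2 = d1 by rewrite -splitr.
have NG : near0 (fun h : V => G (x + h) = Gr C (x + h)).
  exists d2 => // h hd.
  have Qy : Q.@[ev (x + h)] != 0.
    by rewrite Q_ev; apply: Hd1; apply: lt_le_trans hd _; apply: le_trans l2 _;
       rewrite ler_pdivrMr // ler_pMr // ler1n.
  apply: grad_unique (grad_rat (Phat H eps C) Qy).
  apply: grad_local (HG _ _).
    exists (d1 / 2) => // h' h'd; rewrite F_rep //.
    rewrite -addrA; apply: Hd1; apply: le_lt_trans (vnormD _ _) _.
    rewrite -Ehalf; apply: ltrD => //; exact: lt_le_trans hd l2.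
  by rewrite addrAC subrr add0r; apply: lt_le_trans hd l1.
apply/matrixP => k l; rewrite mxE.
have Mkl : forall k l, M k l = ((ratd l (ratd k (Phat H eps C) Q) (Q * Q)).@[ev x]
                                / ((Q * Q) * (Q * Q)).@[ev x]).
  move=> a b.
  have Q0 : (Q * Q).@[ev x] != 0 by rewrite mevalM mulf_neq0 // Q_ev.
  have G1 := jac_entry a J.
  have G2 : is_gradient (fun z => (ratd a (Phat H eps C) Q).@[ev z] / (Q * Q).@[ev z]) x
              (\col_l M a l).
    apply: grad_local G1; apply: near0_imp NG => h ->; by rewrite mxE.
  have := grad_unique G2 (grad_rat _ Q0) => /matrixP /(_ b 0); by rewrite !mxE.
by rewrite !Mkl ratd_sym.
Qed.

End Hess.

Section Final.
Variable R : numFieldType.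
Variable n : nat.
Hypothesis n0 : (0 < n)%N.
Local Notation N := (n + n)%N.
Local Notation V := 'cV[R]_N.
Local Notation A := (Amat R n).
Variable H : 'M[R]_N.
Hypothesis Hsym : H^T = H.
Hypothesis Hadm : A *m H = H *m A^T.
Variable eps : R.

Lemma prop_A : prop H A.
Proof. split => //; [exact: AT_J | exact: Jmat_AT]. Qed.

Lemma prop_mul C1 C2 : prop H C1 -> prop H C2 -> C1 *m C2 = C2 *m C1 ->
  prop H (C1 *m C2).
Proof.
move=> [a1 a2 a3] [b1 b2 b3] cm; split.
- by rewrite -mulmxA b1 mulmxA a1 -mulmxA -trmx_mul cm.
- by move=> z; rewrite trmx_mul -mulmxA a2 mulmxA b2 -mulmxA cm.
- by move=> z; rewrite trmx_mul -mulmxA b3 a3 mulmxA.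
Qed.

Lemma prop_add C1 C2 : prop H C1 -> prop H C2 -> prop H (C1 + C2).
Proof.
move=> [a1 a2 a3] [b1 b2 b3]; split.
- by rewrite mulmxDl a1 b1 linearD /= mulmxDr.
- by move=> z; rewrite linearD /= mulmxDl mulmxDr a2 b2.
- by move=> z; rewrite linearD /= mulmxDl Jmat_add a3 b3 mulmxDl.
Qed.

Lemma prop_scale (c : R) C : prop H C -> prop H (c *: C).
Proof.
move=> [a1 a2 a3]; split.
- by rewrite -scalemxAl a1 linearZ /= scalemxAr.
- by move=> z; rewrite linearZ /= -scalemxAl a2 scalemxAr.
- by move=> z; rewrite linearZ /= -scalemxAl Jmat_scale a3 scalemxAl.
Qed.

Lemma prop0 : prop H 0.
Proof.
split; first by rewrite mul0mx trmx0 mulmx0.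
  by move=> z; rewrite trmx0 mul0mx mulmx0.
by move=> z; rewrite trmx0 !mul0mx Jmat0.
Qed.

Lemma prop_pow i : prop H (A ^+ i).
Proof.
elim: i => [|i IH]; first by rewrite expr0; exact: prop1.
rewrite exprS -mulmxE; apply: prop_mul => //; first exact: prop_A.
by rewrite !mulmxE -exprS -exprSr.
Qed.

Lemma prop_sum (I : Type) (r : seq I) (F : I -> 'M[R]_N) :
  (forall i, prop H (F i)) -> prop H (\sum_(i <- r) F i).
Proof.
move=> PF; elim: r => [|i r IH]; first by rewrite big_nil; exact: prop0.
by rewrite big_cons; apply: prop_add.
Qed.

Lemma DK B (z : V) : prop H B -> B *m B = 1%:M -> Dmat (B *m H) z eps = Dmat H z eps.
Proof.
move=> [b1 b2 _] BB; rewrite /Dmat; congr (_ - _ *: _).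
rewrite b1 !mulmxA -(mulmxA _ B^T) b2 !mulmxA -(mulmxA _ B) b1 !mulmxA.
by rewrite -(mulmxA _ B^T) -trmx_mul BB trmx1 mulmx1.
Qed.

Lemma hess_ext (f f' : V -> R) x M : f =1 f' -> is_hessian f x M -> is_hessian f' x M.
Proof.
move=> E [d dp [G [H1 H2]]]; exists d => //; exists G; split => // y /H1.
exact: grad_ext.
Qed.

Lemma hess_comm C (x : V) M : prop H C -> prop H (A *m C) ->
  Dm H eps x \in unitmx -> is_hessian (Fc H eps C) x M -> A *m M = M *m A^T.
Proof.
move=> PC PAC U [d dp [G [HG J]]].
have d0 : \det (Dm H eps x) != 0 by rewrite -unitfE -unitmxE.
have Msym := hess_sym d0 dp HG J.
have [d1 d1p Hd1] := Q_near d0.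
have [d2 d2p [l1 l2]] := two_pos dp d1p.
have HG' : forall y : V, vnorm (y - x) < d2 ->
    is_gradient (Fc H eps (A *m C)) y (A *m G y).
  move=> y yd.
  have dy : \det (Dm H eps y) != 0.
    by have := Hd1 (y - x) (lt_le_trans yd l2); rewrite addrC subrK.
  have Uy : Dm H eps y \in unitmx by rewrite unitmxE unitfE.
  have -> : G y = gF H eps C y.
    apply: grad_unique (HG y (lt_le_trans yd l1)) (grad_F C dy).
  have := grad_F (A *m C) dy.
  by rewrite (gF_rel Hsym PAC Uy) (gF_rel Hsym PC Uy) mulmxA.
have AMsym := hess_sym d0 d2p HG' (jac_mul A J).
by rewrite -AMsym trmx_mul Msym.
Qed.

End Final.

Theorem mainTheorem4 (R : numFieldType) (n : nat) (Hn : (2 <= n)%N)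
  (H : 'M[R]_(n + n)) (alpha : 'I_n -> R)
  (Hsym : H^T = H)
  (Hadm : Amat R n *m H = H *m (Amat R n)^T)
  (B : 'M[R]_(n + n))
  (HB : B = \sum_(i < n) alpha i *: (Amat R n) ^+ i)
  (HB2 : B *m B = 1%:M)
  (eps : R) (x : 'cV[R]_(n + n)) :
  let K := B *m H in
  ((Dmat H x eps \in unitmx) -> (Dmat K x eps \in unitmx) ->
     exists gH : 'cV[R]_(n + n),
       is_gradient (tildeF H eps) x gH /\ is_gradient (tildeF K eps) x (B *m gH))
  /\
  ((Dmat H x eps \in unitmx) -> forall M : 'M[R]_(n + n),
     is_hessian (tildeF H eps) x M -> Amat R n *m M = M *m (Amat R n)^T)
  /\
  ((Dmat K x eps \in unitmx) -> forall M : 'M[R]_(n + n),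
     is_hessian (tildeF K eps) x M -> Amat R n *m M = M *m (Amat R n)^T).
Proof.
move=> K.
have n0 : (0 < n)%N by apply: leq_trans Hn.
have PB : prop H B.
  rewrite HB; apply: prop_sum => i; apply: prop_scale; exact: prop_pow.
have PAB : prop H (Amat R n *m B).
  rewrite HB mulmx_sumr; apply: prop_sum => i.
  rewrite -scalemxAr; apply: prop_scale.
  rewrite mulmxE -exprS; exact: prop_pow.
have PA1 : prop H (Amat R n *m 1%:M) by rewrite mulmx1; exact: prop_A.
have EH : Fc H eps 1%:M =1 tildeF H eps.
  by move=> z; rewrite /Fc /tildeF /Dm mul1mx.
have EK : Fc H eps B =1 tildeF K eps.
  by move=> z; rewrite /Fc /tildeF /Dm /K DK.
split; [|split].
- move=> UH _; have d0 : \det (Dm H eps x) != 0 by rewrite -unitfE -unitmxE.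
  exists (gF H eps 1%:M x); split.
    exact: grad_ext EH (grad_F 1%:M d0).
  by have := grad_F B d0; rewrite (gF_rel Hsym PB UH); apply: grad_ext.
- move=> UH M HM; apply: (@hess_comm R n H Hsym eps 1%:M x M (prop1 H) PA1 UH).
  by apply: (@hess_ext R n (tildeF H eps) _ x M _ HM) => z; rewrite EH.
- move=> UK M HM.
  have UH : Dm H eps x \in unitmx by rewrite /Dm -(@DK R n H eps B x PB HB2).
  apply: (@hess_comm R n H Hsym eps B x M PB PAB UH).
  by apply: (@hess_ext R n (tildeF K eps) _ x M _ HM) => z; rewrite EK.
Qed.
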